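(* If there is a fork in governance, then the auditor can assign blame to at least $f+1$ misbehaving replicas.
   Context: System model. A service runs on a set of replicas (its configuration), $N$ replicas per configuration with $f=\lceil N/3\rceil-1$, executing the L-PBFT protocol (PBFT-style, with a ledger); each batch at sequence number $s$ is prepared by $N-f$ replicas of the current configuration signing pre-prepare/prepare messages, and pipelining depth is $P$. Governance transactions change the configuration (members and replicas): a referendum is passed by a final vote transaction; the primary ends its batch after each governance transaction, and after the final vote committed at sequence number $s$, it issues $2P$ empty ''end-of-configuration'' batches; the $P$-th end-of-configuration batch (at $s+P$) contains evidence that the batch at $s$ committed and, in its pre-prepare, the committed Merkle root (the root of the ledger's Merkle tree at $s$). A correct replica prepares the $P$-th end-of-configuration batch at $s+P$ only after the final vote transaction triggering the configuration change has committed at $s$ (hence all preceding governance transactions have committed). The governance sub-ledger consists of the governance transactions with their evidence and, for each configuration change, the $P$-th and $2P$-th end-of-configuration batches. The configuration number of a configuration is its distance from the genesis configuration (number $0$). Two $P$-th end-of-configuration batches are equivalent if they are at the same ledger index and sequence number and are preceded by the same valid governance sub-ledger (their pre-prepares contain the same committed Merkle root). There is a fork in governance if there exist two $P$-th end-of-configuration batches for the same configuration number, each belonging to a valid governance sub-ledger, that are not equivalent. The auditor assigns blame to a replica by exhibiting statements signed by that replica that a correct replica would never sign. *)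

(* Defs.v *)
From HB Require Import structures.
From mathcomp Require Import all_boot.
Set Implicit Arguments. Unset Strict Implicit. Unset Printing Implicit Defensive.

Section Governance.
(* R : replica identities; G : governance transactions (with their evidence);
   D : Merkle roots (digests). *)
Variables (R : finType) (G : Type) (D : eqType).

(* f = ceil(N/3) - 1   (ceil(N/3) = (N+2) %/ 3) *)
Definition fault_bound (N : nat) : nat := ((N + 2) %/ 3).-1.

(* A signed protocol message: a prepare (or pre-prepare) for the P-th
   end-of-configuration batch of configuration number k, at ledger index i,
   sequence number s, whose pre-prepare carries committed Merkle root d.
   Encoded as the tuple (k, i, s, d). *)
Definition msg := (nat * nat * nat * D)%type.
Definition msg_config (m : msg) : nat := m.1.1.1.

Definition signed := (R * msg)%type.

(* The P-th end-of-configuration batch (relevant header). *)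
Record eoc_batch := EoC { eoc_idx : nat; eoc_seq : nat; eoc_root : D }.

(* One configuration change as recorded in the governance sub-ledger. *)
Record step := Step {
  st_gov : seq G;            (* governance txs (ending with the final vote) *)
  st_eocP : eoc_batch;
  st_sigs : seq signed;      (* signed (pre-)prepares for the P-th EoC batch *)
  st_eoc2P : nat * nat       (* 2P-th end-of-configuration batch (index, seqno) *)
}.

Definition prepare_of (k : nat) (b : eoc_batch) : msg :=
  (k, eoc_idx b, eoc_seq b, eoc_root b).

(* Configuration number k of a governance sub-ledger L, starting from the
   genesis configuration C0; nc C txs is the configuration obtained from C
   by the governance transactions txs. *)
Definition config_at (C0 : {set R}) (nc : {set R} -> seq G -> {set R})
  (L : seq step) (k : nat) : {set R} :=
  foldl (fun C st => nc C (st_gov st)) C0 (take k L).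

(* Validity of a governance sub-ledger: for each configuration number k,
   configuration k has N replicas, the P-th EoC batch carries the committed
   Merkle root of everything preceding it (the earlier configuration changes
   and the governance transactions of change k), and it was prepared by at
   least N - f replicas of configuration k. *)
Definition valid_subledger (N : nat) (C0 : {set R})
  (nc : {set R} -> seq G -> {set R}) (mroot : seq step -> seq G -> D)
  (L : seq step) : Prop :=
  forall k st, onth L k = Some st ->
    [/\ #|config_at C0 nc L k| = N,
        eoc_root (st_eocP st) = mroot (take k L) (st_gov st) &
        N - fault_bound N <=
          #|[set r in config_at C0 nc L k | (r, prepare_of k (st_eocP st)) \in st_sigs st]| ].

Definition equivalent (b1 b2 : eoc_batch) : Prop :=
  [/\ eoc_idx b1 = eoc_idx b2, eoc_seq b1 = eoc_seq b2 & eoc_root b1 = eoc_root b2].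

Definition gov_fork N C0 nc mroot (L1 L2 : seq step) : Prop :=
  [/\ valid_subledger N C0 nc mroot L1, valid_subledger N C0 nc mroot L2 &
      exists k st1 st2, [/\ onth L1 k = Some st1, onth L2 k = Some st2 &
                            ~ equivalent (st_eocP st1) (st_eocP st2)] ].

(* Statements a correct replica never signs: prepares for two non-equivalent
   P-th end-of-configuration batches of the same configuration number. *)
Definition conflicting (m1 m2 : msg) : Prop :=
  msg_config m1 = msg_config m2 /\ m1 <> m2.

(* Blame: the auditor exhibits, from the evidence ev, two statements signed
   by r that a correct replica would never sign. *)
Definition blamed (ev : seq signed) (r : R) : Prop :=
  exists m1 m2, [/\ (r, m1) \in ev, (r, m2) \in ev & conflicting m1 m2].

Definition evidence (L : seq step) : seq signed := flatten (map st_sigs L).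

End Governance.

(* Main.v *)
Require Import Defs.
From HB Require Import structures.
From mathcomp Require Import all_boot.
From mathcomp Require Import zify.
Set Implicit Arguments. Unset Strict Implicit.

Lemma onth_size (T : Type) (s : seq T) k x : onth s k = Some x -> k < size s.
Proof. by elim: s k => [|y s IH] [|k] //= /IH. Qed.

Lemma config_succ (R : finType) (G : Type) (D : eqType) C0
  (nc : {set R} -> seq G -> {set R}) (L : seq (step R G D)) k st :
  onth L k = Some st ->
  config_at C0 nc L k.+1 = nc (config_at C0 nc L k) (st_gov st).
Proof.
move=> H; rewrite /config_at (take_nth st (onth_size H)) foldl_rcons.
by rewrite (@onth_nth _ st _ _ _ H).
Qed.

Lemma in_evidence (R : finType) (G : Type) (D : eqType)
  (L : seq (step R G D)) k st x :
  onth L k = Some st -> x \in st_sigs st -> x \in evidence L.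
Proof.
rewrite /evidence; elim: L k => [|y L IH] [|k] //=.
- by case=> -> Hx; rewrite mem_cat Hx.
- by move=> H Hx; rewrite mem_cat (IH _ H Hx) orbT.
Qed.

Lemma core (R : finType) (N f : nat) (C : {set R}) (P1 P2 : pred R) :
  #|C| = N -> N - f <= #|[set r in C | P1 r]| ->
  N - f <= #|[set r in C | P2 r]| ->
  N - f - f <= #|[set r in C | P1 r] :&: [set r in C | P2 r]|.
Proof.
move=> HC H1 H2.
have := cardsUI [set r in C | P1 r] [set r in C | P2 r].
have : #|[set r in C | P1 r] :|: [set r in C | P2 r]| <= #|C|.
  apply: subset_leq_card; apply/subsetP => r.
  by rewrite !inE => /orP[/andP[]|/andP[]].
lia.
Qed.

Theorem lemma7 (R : finType) (G : Type) (D : eqType) (N : nat)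
  (C0 : {set R}) (nc : {set R} -> seq G -> {set R})
  (mroot : seq (step R G D) -> seq G -> D) (L1 L2 : seq (step R G D)) :
  0 < N ->
  (* Merkle roots are binding (idealized collision resistance) *)
  (forall p1 g1 p2 g2, mroot p1 g1 = mroot p2 g2 -> p1 = p2 /\ g1 = g2) ->
  gov_fork N C0 nc mroot L1 L2 ->
  exists B : {set R},
    fault_bound N + 1 <= #|B| /\
    forall r, r \in B -> blamed (evidence L1 ++ evidence L2) r.
Proof.
move=> N0 Hinj [V1 V2 [k [st1 [st2 [E1 E2 NE]]]]].
suff main : forall k st1 st2, onth L1 k = Some st1 -> onth L2 k = Some st2 ->
    ~ equivalent (st_eocP st1) (st_eocP st2) ->
    config_at C0 nc L1 k = config_at C0 nc L2 k ->
    exists B : {set R}, fault_bound N + 1 <= #|B| /\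
      forall r, r \in B -> blamed (evidence L1 ++ evidence L2) r.
  elim: k st1 st2 E1 E2 NE => [|k IH] st1 st2 E1 E2 NE.
    by apply: (main 0 st1 st2) => //; rewrite /config_at !take0.
  have [a Ea] : exists a, onth L1 k = Some a.
    have : k < size L1 by have := onth_size E1; lia.
    by rewrite -onthTE; case: onth => [a _|//]; exists a.
  have [b Eb] : exists b, onth L2 k = Some b.
    have : k < size L2 by have := onth_size E2; lia.
    by rewrite -onthTE; case: onth => [b _|//]; exists b.
  case: (boolP ((eoc_idx (st_eocP a) == eoc_idx (st_eocP b)) &&
               (eoc_seq (st_eocP a) == eoc_seq (st_eocP b)) &&
               (eoc_root (st_eocP a) == eoc_root (st_eocP b)))).
  - move=> /andP[/andP[_ _] /eqP Hr].
    apply: (main k.+1 st1 st2) => //.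
    have [_ Ra _] := V1 k a Ea; have [_ Rb _] := V2 k b Eb.
    have [Ht Hg] := Hinj _ _ _ _ (etrans (esym Ra) (etrans Hr Rb)).
    by rewrite (config_succ _ _ Ea) (config_succ _ _ Eb) /config_at Ht Hg.
  - move=> Hn; apply: (IH a b Ea Eb) => -[h1 h2 h3]; move: Hn.
    by rewrite h1 h2 h3 !eqxx.
move=> j s1 s2 F1 F2 NEq HC.
have [c1 _ p1] := V1 j s1 F1; have [c2 _ p2] := V2 j s2 F2.
rewrite HC in c1 p1.
have HB := core c1 p1 p2.
exists ([set r in config_at C0 nc L2 j | (r, prepare_of j (st_eocP s1)) \in st_sigs s1]
   :&: [set r in config_at C0 nc L2 j | (r, prepare_of j (st_eocP s2)) \in st_sigs s2]); split.
  move: HB; rewrite /fault_bound; lia.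
move=> r; rewrite !inE => /andP[/andP[_ h1] /andP[_ h2]].
exists (prepare_of j (st_eocP s1)), (prepare_of j (st_eocP s2)); split.
- by rewrite mem_cat (in_evidence F1 h1).
- by rewrite mem_cat (in_evidence F2 h2) orbT.
- split => // -[e1 e2 e3]; exact: NEq.
Qed.
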